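(* Let $\Omega$ be a finite-dimensional real Euclidean space and $f_1,\dots,f_N\colon\Omega\to\mathbb{R}$ continuous convex functions (not assumed strongly convex) such that $E=\frac1N\sum_{j=1}^N f_j$ is coercive, and let $\theta^*$ be a minimizer of $E$. For $\alpha>0$ let $f_j^\alpha(\theta)=f_j(\theta)+\frac\alpha2\|\theta\|^2$ and $E^\alpha=\frac1N\sum_j f_j^\alpha$. Run DualFL (described in the context) on the functions $f_1^\alpha,\dots,f_N^\alpha$ with hyperparameters $\rho=0$ and $\nu=\alpha$, and suppose that for some $\gamma>0$ the local iterates satisfy $\Gamma^{n,j}(\theta_j^{(n+1)})\le\frac{1}{N\nu(n+1)^{4+\gamma}}$ for all $1\le j\le N$, $n\ge0$. Then the generated sequence $\{\theta^{(n)}\}$ (which depends on $\alpha$) satisfies \[ E(\theta^{(n)})-E(\theta^* )\to0\quad\text{as } n\to\infty \text{ and } \alpha\to0^+ . \]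
   Context: $h^*$ denotes the Legendre--Fenchel conjugate. DualFL applied to convex functions $\tilde f_1,\dots,\tilde f_N$ (here $\tilde f_j=f_j^\alpha$) with hyperparameters $\rho\ge0$, $\nu>0$: set $\theta^{(0)}=\theta_j^{(0)}=0$, $\zeta_j^{(0)}=\zeta_j^{(-1)}=0$, $t_0=1$. For $n=0,1,\dots$: each client $j$ computes an approximate minimizer $\theta_j^{(n+1)}$ of $E^{n,j}(\theta)=\tilde f_j(\theta)-\nu\langle\zeta_j^{(n)},\theta\rangle$; $\theta^{(n+1)}=\frac1N\sum_j\theta_j^{(n+1)}$; $t_{n+1}=\frac{1-\rho t_n^2+\sqrt{(1-\rho t_n^2)^2+4t_n^2}}{2}$, $\beta_n=\frac{t_n-1}{t_{n+1}}\cdot\frac{1-t_{n+1}\rho}{1-\rho}$; $\zeta_j^{(n+1)}=(1+\beta_n)(\zeta_j^{(n)}+\theta^{(n+1)}-\theta_j^{(n+1)})-\beta_n(\zeta_j^{(n-1)}+\theta^{(n)}-\theta_j^{(n)})$. Primal-dual gap: $g_j=\tilde f_j-\frac\nu2\|\cdot\|^2$, $E^{n,j}_{\mathrm d}(\xi)=g_j^*(\xi)+\frac1{2\nu}\|\xi-\nu\zeta_j^{(n)}\|^2$, $\Gamma^{n,j}(\theta)=E^{n,j}(\theta)+E^{n,j}_{\mathrm d}(\nu(\zeta_j^{(n)}-\theta))$. *)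

(* Defs.v *)
From HB Require Import structures.
From mathcomp Require Import all_boot all_order all_algebra.
From mathcomp Require Import all_classical all_reals all_analysis.
Set Implicit Arguments. Unset Strict Implicit. Unset Printing Implicit Defensive.
Import Order.TTheory GRing.Theory Num.Theory.
Import numFieldNormedType.Exports.
Local Open Scope classical_set_scope.
Local Open Scope ring_scope.

Section DualFL.
Variables (R : realType) (d N : nat).
Local Notation vec := 'rV[R]_d.

Definition dot (u v : vec) : R := \sum_(i < d) u ord0 i * v ord0 i.
Definition sqn (u : vec) : R := dot u u.

Definition convex_fun (f : vec -> R) : Prop :=
  forall (x y : vec) (t : R), 0 <= t <= 1 ->
    f (t *: x + (1 - t) *: y) <= t * f x + (1 - t) * f y.

Definition coercive (f : vec -> R) : Prop :=
  forall M : R, exists r : R, forall x : vec, r <= sqn x -> M <= f x.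

Definition avgf (f : 'I_N -> vec -> R) (x : vec) : R :=
  N%:R^-1 * \sum_(j < N) f j x.
Definition avgv (v : 'I_N -> vec) : vec := N%:R^-1 *: \sum_(j < N) v j.

Definition conj (g : vec -> R) (xi : vec) : \bar R :=
  ereal_sup [set (dot xi x - g x)%:E | x in [set: vec]].

Fixpoint tseq (rho : R) (n : nat) : R :=
  match n with
  | 0 => 1
  | m.+1 => let t := tseq rho m in
      (1 - rho * t ^+ 2 + Num.sqrt ((1 - rho * t ^+ 2) ^+ 2 + 4 * t ^+ 2)) / 2
  end.
Definition beta (rho : R) (n : nat) : R :=
  (tseq rho n - 1) / tseq rho n.+1 * ((1 - tseq rho n.+1 * rho) / (1 - rho)).

(* zeta_j^{(n-1)}, with zeta_j^{(-1)} = 0 *)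
Definition zprev (ze : nat -> 'I_N -> vec) (n : nat) (j : 'I_N) : vec :=
  if n is m.+1 then ze m j else 0.

(* (th, ze) is a DualFL run for ft (= tilde f) with hyperparameters rho, nu:
   th n j = theta_j^{(n)}, ze n j = zeta_j^{(n)}, theta^{(n)} = avgv (th n).
   The local iterates th n.+1 j are arbitrary (approximate minimizers); their
   accuracy is constrained separately through the primal-dual gap. *)
Definition dualfl_run (rho : R) (th ze : nat -> 'I_N -> vec) : Prop :=
  (forall j, th 0%N j = 0) /\ (forall j, ze 0%N j = 0) /\
  forall (n : nat) (j : 'I_N),
    ze n.+1 j = (1 + beta rho n) *: (ze n j + avgv (th n.+1) - th n.+1 j)
                - beta rho n *: (zprev ze n j + avgv (th n) - th n j).

Definition Eloc (ft : 'I_N -> vec -> R) (nu : R) (z : vec) (j : 'I_N)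
  (x : vec) : R := ft j x - nu * dot z x.
Definition gfun (ft : 'I_N -> vec -> R) (nu : R) (j : 'I_N) (x : vec) : R :=
  ft j x - nu / 2 * sqn x.
Definition Edual (ft : 'I_N -> vec -> R) (nu : R) (z : vec) (j : 'I_N)
  (xi : vec) : \bar R :=
  (conj (gfun ft nu j) xi + ((2 * nu)^-1 * sqn (xi - nu *: z))%:E)%E.
Definition Gap (ft : 'I_N -> vec -> R) (nu : R) (z : vec) (j : 'I_N)
  (x : vec) : \bar R :=
  ((Eloc ft nu z j x)%:E + Edual ft nu z j (nu *: (z - x)))%E.

End DualFL.

(* Main.v *)
Require Import Defs.
From HB Require Import structures.
From mathcomp Require Import all_boot all_order all_algebra.
From mathcomp Require Import all_classical all_reals all_analysis.
From mathcomp Require Import ring lra.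
Set Implicit Arguments. Unset Strict Implicit. Unset Printing Implicit Defensive.
Import Order.TTheory GRing.Theory Num.Theory.
Import numFieldNormedType.Exports.
Local Open Scope classical_set_scope.
Local Open Scope ring_scope.

Section MDot.
Variable R : realType.

Definition mdot m n (A B : 'M[R]_(m, n)) : R := \sum_(i < m) \sum_(j < n) A i j * B i j.
Definition msq m n (A : 'M[R]_(m, n)) : R := mdot A A.

Variables m n : nat.
Implicit Types A B C : 'M[R]_(m, n).

Lemma mdotC A B : mdot A B = mdot B A.
Proof. by apply: eq_bigr => i _; apply: eq_bigr => j _; rewrite mulrC. Qed.

Lemma mdotDl A B C : mdot (A + B) C = mdot A C + mdot B C.
Proof.
rewrite /mdot -big_split; apply: eq_bigr => i _.
by rewrite -big_split; apply: eq_bigr => j _; rewrite mxE mulrDl.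
Qed.

Lemma mdotZl a A B : mdot (a *: A) B = a * mdot A B.
Proof.
rewrite /mdot mulr_sumr; apply: eq_bigr => i _.
by rewrite mulr_sumr; apply: eq_bigr => j _; rewrite mxE mulrA.
Qed.

Lemma mdotNl A B : mdot (- A) B = - mdot A B.
Proof. by rewrite -scaleN1r mdotZl mulN1r. Qed.

Lemma mdotBl A B C : mdot (A - B) C = mdot A C - mdot B C.
Proof. by rewrite mdotDl mdotNl. Qed.

Lemma mdotDr A B C : mdot A (B + C) = mdot A B + mdot A C.
Proof. by rewrite mdotC mdotDl !(mdotC A). Qed.

Lemma mdotZr a A B : mdot A (a *: B) = a * mdot A B.
Proof. by rewrite mdotC mdotZl mdotC. Qed.

Lemma mdotNr A B : mdot A (- B) = - mdot A B.
Proof. by rewrite mdotC mdotNl mdotC. Qed.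

Lemma mdotBr A B C : mdot A (B - C) = mdot A B - mdot A C.
Proof. by rewrite mdotDr mdotNr. Qed.

Lemma mdot0l A : mdot 0 A = 0.
Proof. by rewrite -(scale0r 0) mdotZl mul0r. Qed.

Lemma mdot0r A : mdot A 0 = 0.
Proof. by rewrite mdotC mdot0l. Qed.

Lemma msq_ge0 A : 0 <= msq A.
Proof. by apply: sumr_ge0 => i _; apply: sumr_ge0 => j _; apply: sqr_ge0. Qed.

Lemma msqD A B : msq (A + B) = msq A + 2 * mdot A B + msq B.
Proof. rewrite /msq !mdotDl !mdotDr (mdotC B A); ring. Qed.

Lemma msqB A B : msq (A - B) = msq A - 2 * mdot A B + msq B.
Proof. rewrite /msq !mdotBl !mdotBr (mdotC B A); ring. Qed.

Lemma msqZ a A : msq (a *: A) = a ^+ 2 * msq A.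
Proof. rewrite /msq mdotZl mdotZr; ring. Qed.

Lemma msqN A : msq (- A) = msq A.
Proof. by rewrite /msq mdotNl mdotNr opprK. Qed.

Lemma young A B c : 0 < c -> 2 * mdot A B <= c * msq A + c^-1 * msq B.
Proof.
move=> c0; have := msq_ge0 (c *: A - B); rewrite msqB msqZ mdotZl => h.
have cV : c * c^-1 = 1 by rewrite divff // gt_eqF.
have : 0 <= c^-1 * (c ^+ 2 * msq A - 2 * (c * mdot A B) + msq B).
  by apply: mulr_ge0 => //; rewrite invr_ge0 ltW.
have -> : c^-1 * (c ^+ 2 * msq A - 2 * (c * mdot A B) + msq B) =
   (c * c^-1) * c * msq A - 2 * (c * c^-1) * mdot A B + c^-1 * msq B by ring.
rewrite cV; lra.
Qed.

Lemma young1 A B : 2 * mdot A B <= msq A + msq B.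
Proof. by have := @young A B 1 ltr01; rewrite invr1 !mul1r. Qed.

Lemma msqD_le A B : msq (A + B) <= 2 * msq A + 2 * msq B.
Proof. rewrite msqD; have := young1 A B; lra. Qed.

Lemma msqB_le A B : msq (A - B) <= 2 * msq A + 2 * msq B.
Proof. by have := msqD_le A (- B); rewrite msqN. Qed.

Lemma msq_conv s A B : 0 <= s <= 1 ->
  msq (s *: A + (1 - s) *: B) <= s * msq A + (1 - s) * msq B.
Proof.
move=> /andP[s0 s1].
have e : s * msq A + (1 - s) * msq B - msq (s *: A + (1 - s) *: B) =
  s * (1 - s) * msq (A - B).
  rewrite (msqD (s *: A)) !msqZ msqB !mdotZl !mdotZr; ring.
have : 0 <= s * (1 - s) * msq (A - B).
  by apply: mulr_ge0; [apply: mulr_ge0; lra | apply: msq_ge0].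
lra.
Qed.

End MDot.

Lemma dotE (R : realType) d (u v : 'rV[R]_d) : dot u v = mdot u v.
Proof. by rewrite /dot /mdot big_ord1. Qed.

Lemma sqnE (R : realType) d (u : 'rV[R]_d) : sqn u = msq u.
Proof. by rewrite /sqn dotE. Qed.

Lemma mdot_rows (R : realType) N d (A B : 'M[R]_(N, d)) :
  mdot A B = \sum_(j < N) dot (row j A) (row j B).
Proof.
by apply: eq_bigr => j _; rewrite /dot; apply: eq_bigr => i _; rewrite !mxE.
Qed.

Section Fista.
Variables (R : realType) (m n : nat).
Local Notation V := 'M[R]_(m, n).
Variables (P : V -> Prop) (Hf : V -> R) (x y : nat -> V) (t e : nat -> R) (a : R) (l : V).
Hypotheses (a0 : 0 < a) (t0 : t 0 = 1) (t1 : forall k, 1 <= t k)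
  (tS : forall k, t k.+1 ^+ 2 - t k.+1 = t k ^+ 2)
  (yS : forall k, y k.+1 = x k.+1 + ((t k - 1) / t k.+1) *: (x k.+1 - x k))
  (Pl : P l) (Px : forall k, P (x k))
  (key : forall k lam, P lam ->
     a * (msq (x k.+1 - y k) / 2 + mdot (y k - lam) (x k.+1 - y k)) - e k
       <= Hf lam - Hf (x k.+1)).

Let W k := t k *: y k - (t k - 1) *: x k - l.
Let D k := t k *: x k.+1 - (t k - 1) *: x k - l.

Lemma fista_step k :
  t k ^+ 2 * (Hf (x k.+1) - Hf l) + a / 2 * msq (D k) <=
  t k * (t k - 1) * (Hf (x k) - Hf l) + a / 2 * msq (W k) + t k ^+ 2 * e k.
Proof.
set d := x k.+1 - y k.
have I1 := key k (Px k); have I2 := key k Pl.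
rewrite -/d in I1 I2.
have eD : D k = W k + t k *: d.
  by apply/matrixP => i j; rewrite /D /W /d !mxE; ring.
rewrite eD msqD msqZ mdotZr /W !mdotBl !mdotZl.
rewrite !mdotBl in I1 I2.
have tk1 := t1 k.
have h1 : 0 <= t k * (t k - 1) by apply: mulr_ge0; lra.
have h2 : 0 <= t k by lra.
have J1 := ler_wpM2l h1 I1.
have J2 := ler_wpM2l h2 I2.
set X := mdot (x k) d in J1 J2 *.
set Y := mdot (y k) d in J1 J2 *.
set L := mdot l d in J1 J2 *.
set S := msq d in J1 J2 *.
set T := t k in J1 J2 h1 h2 tk1 *.
nra.
Qed.

Lemma fista_W k : W k.+1 = D k.
Proof.
have tS0 : t k.+1 != 0 by have := t1 k.+1; apply: contraTneq => ->; rewrite ler10.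
apply/matrixP => i j; rewrite /W /D yS !mxE.
field; exact: tS0.
Qed.

Lemma fista k :
  t k ^+ 2 * (Hf (x k.+1) - Hf l) + a / 2 * msq (D k) <=
  a / 2 * msq (y 0 - l) + \sum_(i < k.+1) t i ^+ 2 * e i.
Proof.
elim: k => [|k IH].
  have eW : W 0 = y 0 - l by apply/matrixP => i j; rewrite /W t0 !mxE; ring.
  have := fista_step 0; rewrite eW big_ord1 t0; lra.
have := fista_step k.+1.
have -> : t k.+1 * (t k.+1 - 1) = t k ^+ 2 by rewrite -(tS k); ring.
rewrite fista_W big_ord_recr /=.
lra.
Qed.

End Fista.

Section Tseq.
Variable R : realType.
Local Notation t := (@tseq R 0).

Lemma tseq0 : t 0 = 1. Proof. by []. Qed.

Lemma tseqS k : t k.+1 = (1 + Num.sqrt (1 + 4 * t k ^+ 2)) / 2.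
Proof. by rewrite /= mul0r subr0 expr1n. Qed.

Lemma tseq_ge1 k : 1 <= t k.
Proof.
elim: k => [|k IH]; first by rewrite tseq0.
rewrite tseqS; set s := Num.sqrt _.
have s0 : 0 <= s by apply: sqrtr_ge0.
have s2 : s ^+ 2 = 1 + 4 * t k ^+ 2 by rewrite sqr_sqrtr //; nra.
nra.
Qed.

Lemma tseq_rec k : t k.+1 ^+ 2 - t k.+1 = t k ^+ 2.
Proof.
rewrite tseqS; set s := Num.sqrt _.
have s2 : s ^+ 2 = 1 + 4 * t k ^+ 2 by rewrite sqr_sqrtr //; have := tseq_ge1 k; nra.
have -> : ((1 + s) / 2) ^+ 2 - (1 + s) / 2 = (s ^+ 2 - 1) / 4 by field.
by rewrite s2; field.
Qed.

Lemma tseq_incr k : t k + 1 / 2 <= t k.+1.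
Proof.
rewrite tseqS; set s := Num.sqrt _; have := tseq_ge1 k => h.
have s0 : 0 <= s by apply: sqrtr_ge0.
have s2 : s ^+ 2 = 1 + 4 * t k ^+ 2 by rewrite sqr_sqrtr //; nra.
nra.
Qed.

Lemma tseq_incr1 k : t k.+1 <= t k + 1.
Proof.
rewrite tseqS; set s := Num.sqrt _; have := tseq_ge1 k => h.
have s0 : 0 <= s by apply: sqrtr_ge0.
have s2 : s ^+ 2 = 1 + 4 * t k ^+ 2 by rewrite sqr_sqrtr //; nra.
nra.
Qed.

Lemma tseq_ge k : (k.+2)%:R / 2 <= t k.
Proof.
elim: k => [|k IH]; first by rewrite tseq0; lra.
have := tseq_incr k; rewrite -[k.+3]addn1 natrD; lra.
Qed.

Lemma tseq_le k : t k <= k.+1%:R.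
Proof.
elim: k => [|k IH]; first by rewrite tseq0.
have := tseq_incr1 k; rewrite -[k.+2]addn1 natrD; lra.
Qed.

Lemma beta0 k : beta (0 : R) k = (t k - 1) / t k.+1.
Proof. by rewrite /beta mulr0 !subr0 divr1 mulr1. Qed.

Lemma beta_bnd k : 0 <= beta (0 : R) k <= 1.
Proof.
rewrite beta0; have h1 := tseq_ge1 k; have h2 := tseq_incr k.
have tp : 0 < t k.+1 by lra.
apply/andP; split; first by apply: divr_ge0; lra.
by rewrite ler_pdivrMr // mul1r; lra.
Qed.

End Tseq.

Section Main.
Variables (R : realType) (d N : nat) (f : 'I_N -> 'rV[R]_d -> R) (thstar : 'rV[R]_d)
  (alpha gamma : R) (th ze : nat -> 'I_N -> 'rV[R]_d).
Hypotheses (N0 : (0 < N)%N) (fcont : forall j, continuous (f j))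
  (fconv : forall j, convex_fun (f j)) (a0 : 0 < alpha) (g0 : 0 < gamma)
  (run : dualfl_run 0 th ze).
Definition fa := fun (j : 'I_N) (x : 'rV[R]_d) => f j x + alpha / 2 * sqn x.
Hypothesis gap : forall (n : nat) (j : 'I_N),
  (Gap fa alpha (ze n j) j (th n.+1 j)
     <= ((N%:R * alpha * (n.+1%:R `^ (4 + gamma)))^-1)%:E)%E.

Definition del n : R := (N%:R * alpha * (n.+1%:R `^ (4 + gamma)))^-1.

Lemma datum n j w :
  fa j (th n.+1 j) + alpha * mdot (ze n j) (w - th n.+1 j)
   + alpha / 2 * msq (w - th n.+1 j) - del n <= fa j w.
Proof.
have := gap n j; rewrite /Gap /Edual.
set x := th n.+1 j; set z := ze n j.
set xi := alpha *: (z - x).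
have ub : ((dot xi w - gfun fa alpha j w)%:E <= conj (gfun fa alpha j) xi)%E.
  by apply: ereal_sup_ubound; exists w.
move=> h.
have h2 := le_trans (leeD2l (Eloc fa alpha z j x)%:E
   (leeD2r ((2 * alpha)^-1 * sqn (xi - alpha *: z))%:E ub)) h.
rewrite -!EFinD lee_fin -/(del n) in h2.
move: h2; rewrite /Eloc /gfun.
have -> : xi - alpha *: z = - (alpha *: x).
  by apply/matrixP => i k; rewrite /xi !mxE; ring.
rewrite !dotE !sqnE msqN msqZ /xi mdotZl mdotBl mdotBr msqB.
have -> : (2 * alpha)^-1 * (alpha ^+ 2 * msq x) = alpha / 2 * msq x.
  by field; rewrite gt_eqF.
rewrite ?(mdotC w x) ?(mdotC x z).
rewrite /fa !sqnE.
generalize (del n) => D.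
lra.
Qed.

Lemma Phi_ub_gen j lam x y dl :
  (forall w, fa j x + alpha * mdot y (w - x) + alpha / 2 * msq (w - x) - dl <= fa j w) ->
  forall w, mdot lam w - fa j w <=
    mdot lam x - fa j x + dl + msq (lam - alpha *: y) / (2 * alpha).
Proof.
move=> hyp w; have Y := young (w - x) (lam - alpha *: y) a0.
have h := hyp w.
have e1 : mdot lam w = mdot lam x + mdot lam (w - x) by rewrite mdotBr; ring.
have e2 : mdot (w - x) (lam - alpha *: y) = mdot lam (w - x) - alpha * mdot y (w - x).
  rewrite [LHS]mdotBr [in LHS]mdotZr; rewrite !(mdotC (w - x)) //.
rewrite e2 in Y; move: Y; set U := (X in _ <= _ + X) => Y.
have e3 : msq (lam - alpha *: y) / (2 * alpha) = U / 2.
  by rewrite /U; field; rewrite gt_eqF.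
rewrite e1 e3.
move: Y h; move: (mdot lam (w - x)) (mdot y (w - x)) (msq (w - x)) => P Q S.
move=> Y h.
have e4 : alpha / 2 * S = alpha * S / 2 by ring.
rewrite e4 in h.
lra.
Qed.

Definition PhiS j (lam : 'rV[R]_d) := [set mdot lam w - fa j w | w in [set: 'rV[R]_d]].
Definition Phi j (lam : 'rV[R]_d) : R := sup (PhiS j lam).

Lemma Phi_has_sup j lam : has_sup (PhiS j lam).
Proof.
split; first by exists (mdot lam 0 - fa j 0); exists 0.
have hyp := datum 0 j.
exists (mdot lam (th 1 j) - fa j (th 1 j) + del 0 + msq (lam - alpha *: ze 0 j) / (2 * alpha)).
by move=> _ [w _ <-]; apply: Phi_ub_gen hyp w.
Qed.

Lemma Phi_ge j lam w : mdot lam w - fa j w <= Phi j lam.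
Proof. by apply: sup_upper_bound; [exact: Phi_has_sup | exists w]. Qed.

Lemma Phi_le j lam x y dl :
  (forall w, fa j x + alpha * mdot y (w - x) + alpha / 2 * msq (w - x) - dl <= fa j w) ->
  Phi j lam <= mdot lam x - fa j x + dl + msq (lam - alpha *: y) / (2 * alpha).
Proof.
move=> hyp; apply: ge_sup; first by exists (mdot lam 0 - fa j 0); exists 0.
by move=> _ [w _ <-]; apply: Phi_ub_gen.
Qed.


Lemma rowDm (A B : 'M[R]_(N, d)) j : row j (A + B) = row j A + row j B.
Proof. by apply/rowP => k; rewrite !mxE. Qed.
Lemma rowBm (A B : 'M[R]_(N, d)) j : row j (A - B) = row j A - row j B.
Proof. by apply/rowP => k; rewrite !mxE. Qed.
Lemma rowZm (a : R) (A : 'M[R]_(N, d)) j : row j (a *: A) = a *: row j A.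
Proof. by apply/rowP => k; rewrite !mxE. Qed.

Lemma mdot_suml (F : 'I_N -> 'rV[R]_d) v :
  mdot (\sum_j F j) v = \sum_j mdot (F j) v.
Proof.
apply: (big_morph (fun A => mdot A v)) => [A B|]; first exact: mdotDl.
exact: mdot0l.
Qed.

Lemma mdot_rowsE (A B : 'M[R]_(N, d)) :
  mdot A B = \sum_j mdot (row j A) (row j B).
Proof. by rewrite mdot_rows; apply: eq_bigr => j _; rewrite dotE. Qed.

Definition rowsum (A : 'M[R]_(N, d)) : 'rV[R]_d := \sum_j row j A.
Definition feas (A : 'M[R]_(N, d)) : Prop := rowsum A = 0.

Lemma rowsumB A B : rowsum (A - B) = rowsum A - rowsum B.
Proof. by rewrite /rowsum -sumrB; apply: eq_bigr => j _; rewrite rowBm. Qed.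
Lemma rowsumD A B : rowsum (A + B) = rowsum A + rowsum B.
Proof. by rewrite /rowsum -big_split; apply: eq_bigr => j _; rewrite rowDm. Qed.
Lemma rowsumZ a A : rowsum (a *: A) = a *: rowsum A.
Proof. by rewrite /rowsum scaler_sumr; apply: eq_bigr => j _; rewrite rowZm. Qed.

Definition Hf (A : 'M[R]_(N, d)) : R := \sum_j Phi j (alpha *: row j A).
Definition Zm n : 'M[R]_(N, d) := \matrix_j ze n j.
Definition Em n : 'M[R]_(N, d) := \matrix_j (zprev ze n j + avgv (th n) - th n j).

Lemma row_Zm n j : row j (Zm n) = ze n j.
Proof. by rewrite rowK. Qed.
Lemma row_Em n j : row j (Em n) = zprev ze n j + avgv (th n) - th n j.
Proof. by rewrite rowK. Qed.

Lemma sum_avgv (v : 'I_N -> 'rV[R]_d) : \sum_(j < N) avgv v = \sum_j v j.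
Proof.
rewrite sumr_const card_ord /avgv -scaler_nat scalerA mulfV ?scale1r //.
by rewrite pnatr_eq0 -lt0n.
Qed.

Lemma Zm_rec n : Zm n.+1 = (1 + beta 0 n) *: Em n.+1 - beta 0 n *: Em n.
Proof.
have [_ [_ r]] := run.
apply/row_matrixP => j.
by rewrite row_Zm rowBm !rowZm !row_Em r.
Qed.

Lemma Zm0 : Zm 0 = 0.
Proof.
have [_ [z0 _]] := run.
by apply/row_matrixP => j; rewrite row_Zm z0; apply/rowP => k; rewrite !mxE.
Qed.

Lemma avg0 : avgv (th 0) = 0.
Proof.
have [t0 _] := run.
by rewrite /avgv big1 ?scaler0 // => j _; rewrite t0.
Qed.

Lemma Em0 : Em 0 = 0.
Proof.
have [t0 _] := run.
apply/row_matrixP => j; rewrite row_Em avg0 t0 /=.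
by apply/rowP => k; rewrite !mxE; ring.
Qed.

Lemma rowsum_Em n : rowsum (Em n.+1) = rowsum (Zm n).
Proof.
rewrite /rowsum.
under eq_bigr do rewrite row_Em.
under [in RHS]eq_bigr do rewrite row_Zm.
rewrite /= sumrB big_split /= sum_avgv /avgv.
by rewrite addrK.
Qed.

Lemma feas_ZE n : feas (Zm n) /\ feas (Em n).
Proof.
elim: n => [|n [fz fe]].
  rewrite /feas Zm0 Em0 /rowsum big1 // => j _.
  by apply/rowP => k; rewrite !mxE.
have fe' : feas (Em n.+1) by rewrite /feas rowsum_Em.
split=> //.
by rewrite /feas Zm_rec rowsumB !rowsumZ fe' fe !scaler0 subr0.
Qed.


Lemma row_Em1 n j : row j (Em n.+1) = ze n j + avgv (th n.+1) - th n.+1 j.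
Proof. by rewrite row_Em. Qed.

Lemma xj_eq n j : th n.+1 j = (row j (Zm n) - row j (Em n.+1)) + avgv (th n.+1).
Proof. by rewrite row_Em1 row_Zm; apply/rowP => k; rewrite !mxE; ring. Qed.

Lemma S1 n lam : feas lam ->
  \sum_j mdot (row j lam - row j (Em n.+1)) (th n.+1 j) =
  mdot (lam - Em n.+1) (Zm n - Em n.+1).
Proof.
move=> fl.
under eq_bigr do rewrite xj_eq mdotDr.
rewrite big_split /= -mdot_suml.
have -> : \sum_j (row j lam - row j (Em n.+1)) = rowsum (lam - Em n.+1).
  by apply: eq_bigr => j _; rewrite rowBm.
rewrite rowsumB fl (proj2 (feas_ZE n.+1)) subr0 mdot0l addr0 mdot_rowsE.
by apply: eq_bigr => j _; rewrite !rowBm.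
Qed.

Lemma S2 (A B : 'M[R]_(N, d)) : \sum_j msq (row j A - row j B) = msq (A - B).
Proof. by rewrite /msq mdot_rowsE; apply: eq_bigr => j _; rewrite rowBm. Qed.

Lemma msq_scale_div (u v : 'rV[R]_d) :
  msq (alpha *: u - alpha *: v) / (2 * alpha) = alpha / 2 * msq (u - v).
Proof.
have -> : alpha *: u - alpha *: v = alpha *: (u - v).
  by apply/rowP => k; rewrite !mxE; ring.
by rewrite msqZ; field; rewrite gt_eqF.
Qed.

Lemma key n lam : feas lam ->
  alpha * (msq (Em n.+1 - Zm n) / 2 + mdot (Zm n - lam) (Em n.+1 - Zm n))
   - N%:R * del n <= Hf lam - Hf (Em n.+1).
Proof.
move=> fl.
have step : forall j : 'I_N,
  alpha * mdot (row j lam - row j (Em n.+1)) (th n.+1 j) - del n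
   - alpha / 2 * msq (row j (Em n.+1) - row j (Zm n))
  <= Phi j (alpha *: row j lam) - Phi j (alpha *: row j (Em n.+1)).
  move=> j.
  have L := Phi_ge j (alpha *: row j lam) (th n.+1 j).
  have U := Phi_le (alpha *: row j (Em n.+1)) (datum n j).
  rewrite -row_Zm msq_scale_div !mdotZl in U.
  rewrite mdotZl in L.
  rewrite mdotBl; lra.
have := @ler_sum _ _ (index_enum 'I_N) xpredT _ _ (fun j _ => step j).
rewrite sumrB /Hf -/(Hf lam).
rewrite sumrB sumrB -mulr_sumr -mulr_sumr S1 // S2 sumr_const card_ord.
move=> h; apply: le_trans h.
have -> : del n *+ N = N%:R * del n by rewrite mulr_natl.
rewrite !msqB !mdotBl !mdotBr.
rewrite ?(mdotC lam) ?(mdotC (Em n.+1) (Zm n)).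
set A1 := mdot (Zm n) lam; set A2 := mdot (Em n.+1) lam.
set A3 := mdot (Zm n) (Em n.+1).
set A4 := mdot (Em n.+1) (Em n.+1); set A5 := mdot (Zm n) (Zm n).
rewrite /msq -/A4 -/A5.
nra.
Qed.


Local Notation t := (@tseq R 0).

Lemma del_bnd i : t i ^+ 2 * (N%:R * del i) <= alpha^-1 / (i.+1%:R ^+ 2).
Proof.
set a : R := i.+1%:R.
have a1 : 1 <= a by rewrite /a ler1n.
set q := a `^ (4 + gamma).
have hq : a ^+ 4 <= q.
  rewrite /q -(@powR_mulrn _ a 4); last by lra.
  by apply: ler_powR => //; rewrite lerDl ltW.
have a4 : 0 < a ^+ 4 by apply: exprn_gt0; lra.
have q0 : 0 < q by lra.
have Np : (0 : R) < N%:R by rewrite ltr0n.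
have -> : N%:R * del i = (alpha * q)^-1.
  rewrite /del -/a -/q; field.
  by apply/and3P; split; rewrite gt_eqF.
have ht := tseq_le R i; have ht1 := tseq_ge1 R i.
rewrite -/a in ht.
have ht2 : t i ^+ 2 <= a ^+ 2 by nra.
have hinv : (alpha * q)^-1 <= (alpha * a ^+ 4)^-1.
  rewrite lef_pV2 ?posrE ?mulr_gt0 //.
  apply: ler_wpM2l; [exact: ltW | exact: hq].
apply: le_trans (ler_pM _ _ ht2 hinv) _.
- by apply: exprn_ge0; lra.
- by rewrite invr_ge0; apply: mulr_ge0; apply: ltW.
have -> : a ^+ 2 * (alpha * a ^+ 4)^-1 = alpha^-1 / a ^+ 2.
  by field; apply/andP; split; rewrite gt_eqF //; lra.
by [].
Qed.

Lemma sum_inv_sq k : \sum_(i < k) (i.+1%:R ^+ 2 : R)^-1 <= 2 - 2 / k.+1%:R.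
Proof.
elim: k => [|k IH]; first by rewrite big_ord0; lra.
rewrite big_ord_recr /=.
set u : R := k.+1%:R in IH *.
have u1 : 1 <= u by rewrite /u ler1n.
have -> : k.+2%:R = u + 1 by rewrite /u -addn1 natrD.
have e : 2 - 2 / (u + 1) - (2 - 2 / u + u ^- 2) = (u - 1) / (u ^+ 2 * (u + 1)).
  by field; apply/andP; split; rewrite gt_eqF //; lra.
have : 0 <= (u - 1) / (u ^+ 2 * (u + 1)).
  apply: divr_ge0; first lra.
  by apply: mulr_ge0; [apply: exprn_ge0|]; lra.
rewrite -e => h; apply: le_trans (lerD IH (lexx _)) _; rewrite -subr_ge0; exact: h.
Qed.

Lemma err_sum k : \sum_(i < k) t i ^+ 2 * (N%:R * del i) <= 2 / alpha.
Proof.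
have h1 : \sum_(i < k) t i ^+ 2 * (N%:R * del i) <=
    \sum_(i < k) alpha^-1 / (i.+1%:R ^+ 2) by apply: ler_sum => i _; exact: del_bnd.
apply: le_trans h1 _.
rewrite -mulr_sumr.
have h2 := sum_inv_sq k.
have h3 : 2 - 2 / k.+1%:R <= (2 : R).
  by rewrite lerBlDr lerDl divr_ge0 // ler0n.
have ai : 0 < alpha^-1 by rewrite invr_gt0.
have h := ler_wpM2l (ltW ai) (le_trans h2 h3); apply: le_trans h _.
by rewrite mulrC.
Qed.

Definition V k := t k *: Em k.+1 - (t k - 1) *: Em k.

Lemma Zm_recS k : Zm k.+1 = Em k.+1 + ((t k - 1) / t k.+1) *: (Em k.+1 - Em k).
Proof.
rewrite Zm_rec beta0.
apply/matrixP => i j; rewrite !mxE.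
by ring.
Qed.

Lemma lyap k l : feas l ->
  t k ^+ 2 * (Hf (Em k.+1) - Hf l) + alpha / 2 * msq (V k - l)
   <= alpha / 2 * msq l + 2 / alpha.
Proof.
move=> fl.
have := @fista R N d feas Hf Em Zm t (fun k => N%:R * del k) alpha l (tseq0 R)
  (@tseq_ge1 R) (@tseq_rec R) Zm_recS fl (fun k => proj2 (feas_ZE k)) (@key) k.
rewrite Zm0 sub0r msqN.
move=> hf; apply: le_trans hf _; exact: lerD (lexx _) (err_sum k.+1).
Qed.


Lemma le_sum_term (I : finType) (F : I -> R) k :
  (forall i, 0 <= F i) -> F k <= \sum_i F i.
Proof.
move=> h; rewrite (bigD1 k) //= lerDl; apply: sumr_ge0 => i _; exact: h.
Qed.

Lemma feas0 : feas 0.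
Proof. by rewrite /feas /rowsum big1 // => j _; apply/rowP => k; rewrite !mxE. Qed.

Lemma Phi_lb j lam : - fa j 0 <= Phi j lam.
Proof. by have := Phi_ge j lam 0; rewrite mdot0r sub0r. Qed.

Lemma Hf_lb mu : - \sum_j fa j 0 <= Hf mu.
Proof. by rewrite -sumrN; apply: ler_sum => j _; exact: Phi_lb. Qed.

Definition SH := [set Hf mu | mu in feas].

Lemma SH_inf : has_inf SH.
Proof.
split; first by exists (Hf 0); exists 0 => //; exact: feas0.
by exists (- \sum_j fa j 0) => _ [mu _ <-]; exact: Hf_lb.
Qed.

Lemma inf_le mu : feas mu -> inf SH <= Hf mu.
Proof. by move=> fm; apply: ge_inf; [case: SH_inf | exists mu]. Qed.

Lemma near_opt eta : 0 < eta -> exists l, feas l /\ Hf l < inf SH + eta.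
Proof.
move=> e0; have [_ [l fl <-] h] := inf_adherent e0 SH_inf.
by exists l.
Qed.

Lemma mdot_delta (u : 'rV[R]_d) i : mdot u (delta_mx 0 i) = u 0 i.
Proof.
rewrite /mdot big_ord1 (bigD1 i) //= big1 => [|k nk]; last first.
  by rewrite mxE (negbTE nk) andbF mulr0.
by rewrite mxE !eqxx mulr1 addr0.
Qed.

Definition C0 := \sum_k `|fa k 0|.
Definition cji (j : 'I_N) (i : 'I_d) := `|fa j (delta_mx 0 i)| + `|fa j (- delta_mx 0 i)|.
Definition Ctot := \sum_k \sum_i cji k i.

Lemma entry_bnd (mu : 'M[R]_(N, d)) j i : alpha * `|mu j i| <= Hf mu + C0 + Ctot.
Proof.
set P := Phi j (alpha *: row j mu).
have L1 := Phi_ge j (alpha *: row j mu) (delta_mx 0 i).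
have L2 := Phi_ge j (alpha *: row j mu) (- delta_mx 0 i).
rewrite mdotNr !mdotZl mdot_delta mxE in L1 L2.
have h1 : alpha * `|mu j i| <= P + cji j i.
  rewrite /cji.
  have n1 := ler_norm (fa j (delta_mx 0 i)).
  have n2 := ler_norm (fa j (- delta_mx 0 i)).
  have n3 := normr_ge0 (fa j (delta_mx 0 i)).
  have n4 := normr_ge0 (fa j (- delta_mx 0 i)).
  have [hm|hm] := lerP 0 (mu j i).
    by rewrite ger0_norm //; rewrite -/P in L1; lra.
  by rewrite ltr0_norm //; rewrite -/P in L2; lra.
have h2 : P + `|fa j 0| <= Hf mu + C0.
  rewrite /Hf /C0 -big_split /=.
  apply: (le_sum_term (F := fun k => Phi k (alpha *: row k mu) + `|fa k 0|)).
  move=> k; have := Phi_lb k (alpha *: row k mu).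
  have := ler_norm (fa k 0); lra.
have h3 : cji j i <= Ctot.
  apply: le_trans (le_sum_term (F := fun k => \sum_i cji k i) j _).
    apply: (le_sum_term (F := fun i => cji j i)) => i'.
    by rewrite /cji addr_ge0.
  by move=> k; apply: sumr_ge0 => i' _; rewrite /cji addr_ge0.
have := normr_ge0 (fa j 0).
lra.
Qed.

Definition Bb := (Hf 0 + 1 + C0 + Ctot) / alpha.
Definition Bsq := (Bb ^+ 2 *+ d) *+ N.

Lemma l_bnd (l : 'M[R]_(N, d)) : Hf l <= Hf 0 + 1 -> msq l <= Bsq.
Proof.
move=> hl.
have hB : forall j i, `|l j i| <= Bb.
  move=> j i; have := entry_bnd l j i.
  rewrite /Bb ler_pdivlMr // => h.
  by rewrite mulrC; apply: le_trans h _; lra.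
rewrite /msq /mdot /Bsq.
have e1 : (Bb ^+ 2 *+ d) *+ N = \sum_(j < N) \sum_(i < d) Bb ^+ 2.
  by rewrite sumr_const card_ord; congr (_ *+ _); rewrite sumr_const card_ord.
rewrite e1; apply: ler_sum => j _; apply: ler_sum => i _.
rewrite -expr2 -real_normK ?num_real //.
have := hB j i; have := normr_ge0 (l j i); nra.
Qed.


Definition Kv := 2 * (Bsq + 2 / alpha * (2 / alpha + 1)) + 2 * Bsq.

Lemma tpos k : 0 < t k. Proof. exact: lt_le_trans ltr01 (tseq_ge1 R k). Qed.

Lemma V_bnd k : msq (V k) <= Kv.
Proof.
have t1 := tseq_ge1 R k.
have tp : 0 < t k ^+ 2 by apply: exprn_gt0; exact: tpos.
have t21 : 1 <= t k ^+ 2 by nra.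
set eta := (t k ^+ 2)^-1.
have ep : 0 < eta by rewrite invr_gt0.
have e1 : eta <= 1 by rewrite invf_le1.
have [l [fl hl]] := near_opt ep.
have i1 := inf_le (proj2 (feas_ZE k.+1)).
have i0 := inf_le feas0.
have hl1 : Hf l <= Hf 0 + 1 by lra.
have ml := l_bnd hl1.
have L := lyap k fl.
have h4 : -1 <= t k ^+ 2 * (Hf (Em k.+1) - Hf l).
  have h5 : - eta <= Hf (Em k.+1) - Hf l by lra.
  have := ler_wpM2l (ltW tp) h5.
  by rewrite mulrN /eta mulfV // gt_eqF.
have h6 : alpha / 2 * msq (V k - l) <= alpha / 2 * (Bsq + 2 / alpha * (2 / alpha + 1)).
  have -> : alpha / 2 * (Bsq + 2 / alpha * (2 / alpha + 1)) =
            alpha / 2 * Bsq + (2 / alpha + 1) by field; rewrite gt_eqF.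
  have := ler_wpM2l (ltW (divr_gt0 a0 (ltr0Sn R 1))) ml.
  lra.
have h7 : msq (V k - l) <= Bsq + 2 / alpha * (2 / alpha + 1).
  by move: h6; rewrite ler_pM2l // divr_gt0.
have := msqD_le (V k - l) l; rewrite subrK => h8.
rewrite /Kv; lra.
Qed.

Lemma Em_conv k : Em k.+1 = (t k)^-1 *: V k + (1 - (t k)^-1) *: Em k.
Proof.
have := tpos k => h.
rewrite /V; move: (Em k.+1) (Em k) => A B.
apply/matrixP => i j; rewrite !mxE; field; by rewrite gt_eqF.
Qed.

Lemma Kv_ge0 : 0 <= Kv.
Proof. exact: le_trans (msq_ge0 _) (V_bnd 0). Qed.

Lemma Em_bnd k : msq (Em k) <= Kv.
Proof.
elim: k => [|k IH]; first by rewrite Em0 /msq mdot0l Kv_ge0.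
rewrite Em_conv.
have t1 := tseq_ge1 R k.
have s01 : 0 <= (t k)^-1 <= 1.
  by apply/andP; split; [rewrite invr_ge0; lra | rewrite invf_le1 //; exact: tpos].
apply: le_trans (msq_conv _ _ s01) _.
have := V_bnd k.
case/andP: s01 => s0 s1.
move=> hv; set s := (t k)^-1 in s0 s1 *.
nra.
Qed.

Lemma inc_bnd k : msq (Em k.+1 - Em k) <= 16 * Kv / (k.+2%:R ^+ 2).
Proof.
have tp := tpos k.
have -> : Em k.+1 - Em k = (t k)^-1 *: (V k - Em k).
  rewrite /V; move: (Em k.+1) (Em k) => A B.
  apply/matrixP => i j; rewrite !mxE; field; by rewrite gt_eqF.
rewrite msqZ.
have h1 := msqB_le (V k) (Em k).
have h2 := V_bnd k; have h3 := Em_bnd k.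
have h4 : msq (V k - Em k) <= 4 * Kv by lra.
have tg := tseq_ge R k.
set u : R := k.+2%:R in tg *.
have u0 : 0 < u by rewrite /u ltr0n.
have tu : u ^+ 2 / 4 <= t k ^+ 2.
  have : 0 <= u / 2 by apply: divr_ge0; lra.
  nra.
have tk2 : 0 < t k ^+ 2 by apply: exprn_gt0.
rewrite exprVn.
have hm := msq_ge0 (V k - Em k).
rewrite ler_pdivlMr; last by apply: exprn_gt0.
have K0 := Kv_ge0.
have w0 : 0 <= t k ^- 2 by rewrite invr_ge0 ltW.
have wt : t k ^- 2 * t k ^+ 2 = 1 by rewrite mulVf // gt_eqF.
have hu4 : u ^+ 2 <= 4 * t k ^+ 2 by lra.
have wu : t k ^- 2 * u ^+ 2 <= 4 by nra.
have -> : t k ^- 2 * msq (V k - Em k) * u ^+ 2 = msq (V k - Em k) * (t k ^- 2 * u ^+ 2) by ring.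
have wu0 : 0 <= t k ^- 2 * u ^+ 2 by apply: mulr_ge0 => //; apply: sqr_ge0.
nra.
Qed.

Definition G n := Zm n - Em n.+1.

Lemma G_bnd n : msq (G n) <= 64 * Kv / n.+1%:R.
Proof.
have K0 := Kv_ge0.
case: n => [|k].
  rewrite /G Zm0 sub0r msqN.
  have := inc_bnd 0; rewrite Em0 subr0 => h; apply: le_trans h _.
  rewrite expr2 -natrM /=.
  by rewrite ler_pdivrMr ?ltr0n // divr1; nra.
rewrite /G Zm_recS.
have -> : Em k.+1 + ((t k - 1) / t k.+1) *: (Em k.+1 - Em k) - Em k.+2 =
   ((t k - 1) / t k.+1) *: (Em k.+1 - Em k) - (Em k.+2 - Em k.+1).
  by move: (Em k.+1) (Em k) (Em k.+2) => A B C; apply/matrixP => i j; rewrite !mxE; ring.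
apply: le_trans (msqB_le _ _) _.
rewrite msqZ.
have hb := beta_bnd R k; rewrite beta0 in hb.
case/andP: hb => b0 b1.
have i1 := inc_bnd k; have i2 := inc_bnd k.+1.
set b := (t k - 1) / t k.+1 in b0 b1 *.
have b2 : b ^+ 2 <= 1 by nra.
set u : R := k.+2%:R in i1 i2 *.
have u1 : 1 <= u by rewrite /u ler1n.
have e3 : k.+3%:R = u + 1 by rewrite /u -addn1 natrD.
rewrite e3 in i2.
have hm1 := msq_ge0 (Em k.+1 - Em k).
have up : 0 < u by lra.
have uu : u <= u ^+ 2 by nra.
have uu2 : u <= (u + 1) ^+ 2 by nra.
have q1 : 16 * Kv / u ^+ 2 <= 16 * Kv / u.
  apply: ler_wpM2l; first lra.
  by rewrite lef_pV2 ?posrE // exprn_gt0.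
have q2 : 16 * Kv / (u + 1) ^+ 2 <= 16 * Kv / u.
  apply: ler_wpM2l; first lra.
  by rewrite lef_pV2 ?posrE // exprn_gt0 // addr_gt0.
have h1 : b ^+ 2 * msq (Em k.+1 - Em k) <= 16 * Kv / u.
  apply: le_trans (ler_piMl hm1 b2) _; exact: le_trans i1 q1.
have h2 : msq (Em k.+2 - Em k.+1) <= 16 * Kv / u by exact: le_trans i2 q2.
have -> : 64 * Kv / u = 2 * (2 * (16 * Kv / u)) by field; lra.
have : 0 <= 16 * Kv / u by apply: divr_ge0; lra.
move=> _; have z2 : (0:R) <= 2 by []. apply: le_trans (lerD (ler_wpM2l z2 h1) (ler_wpM2l z2 h2)) _; set w := 16 * Kv / u; lra.
Qed.


Lemma row_G n j : row j (G n) = th n.+1 j - avgv (th n.+1).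
Proof.
rewrite /G rowBm row_Zm row_Em1.
by apply/rowP => k; rewrite !mxE; ring.
Qed.

Lemma primal1 n :
  \sum_j fa j (th n.+1 j) <= \sum_j fa j thstar + alpha * mdot (Em n.+1) (G n)
     + alpha / 2 * msq (G n) + N%:R * del n.
Proof.
set E := Em n.+1.
have U : forall j : 'I_N, Phi j (alpha *: row j E) <=
   alpha * mdot (row j E) (th n.+1 j) - fa j (th n.+1 j) + del n
   + alpha / 2 * msq (row j (G n)).
  move=> j; have := Phi_le (alpha *: row j E) (datum n j).
  rewrite -row_Zm msq_scale_div mdotZl.
  have -> : row j E - row j (Zm n) = - row j (G n).
    by rewrite /G rowBm opprB.
  by rewrite msqN.
have SU := ler_sum (index_enum 'I_N) (P := xpredT) (fun j _ => U j).
have L : - \sum_j fa j thstar <= Hf E.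
  have -> : - \sum_j fa j thstar = \sum_j (mdot (alpha *: row j E) thstar - fa j thstar).
    rewrite sumrB -mdot_suml -scaler_sumr.
    have -> : \sum_j row j E = rowsum E by [].
    by rewrite (proj2 (feas_ZE n.+1)) scaler0 mdot0l sub0r.
  by apply: ler_sum => j _; apply: Phi_ge.
have e1 : \sum_j mdot (row j E) (th n.+1 j) = mdot E (G n).
  have ej : forall j, th n.+1 j = row j (G n) + avgv (th n.+1) by move=> j; rewrite row_G subrK.
  under eq_bigr => j _ do rewrite [th n.+1 j]ej mdotDr.
  rewrite big_split /= -mdot_suml.
  have -> : \sum_j row j E = rowsum E by [].
  by rewrite (proj2 (feas_ZE n.+1)) mdot0l addr0 mdot_rowsE.
have e2 : \sum_j msq (row j (G n)) = msq (G n).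
  by rewrite /msq mdot_rowsE.
rewrite !big_split /= -!mulr_sumr e1 e2 sumrN sumr_const card_ord in SU.
rewrite /Hf in L; rewrite -/E.
move: SU.
have -> : del n *+ N = N%:R * del n by rewrite mulr_natl.
move: (\sum_(j < N) Phi j (alpha *: row j E)) L => P L SU.
move: (alpha * mdot E (G n)) (alpha / 2 * msq (G n)) (N%:R * del n) SU => A B C SU.
move: (\sum_j fa j thstar) (\sum_(i < N) fa i (th n.+1 i)) L SU => X Y L SU.
lra.
Qed.


Lemma del_ge0 n : 0 <= del n.
Proof.
rewrite /del invr_ge0; apply: mulr_ge0; last exact: powR_ge0.
by apply: mulr_ge0; [rewrite ler0n | exact: ltW].
Qed.

Lemma Ndel_le n : N%:R * del n <= alpha^-1 / n.+1%:R.
Proof.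
have h := del_bnd n.
have t1 := tseq_ge1 R n.
have t21 : 1 <= t n ^+ 2 by nra.
have nd : 0 <= N%:R * del n by apply: mulr_ge0; [rewrite ler0n | exact: del_ge0].
have h1 : N%:R * del n <= t n ^+ 2 * (N%:R * del n) by rewrite ler_peMl.
apply: le_trans h1 _; apply: le_trans h _.
apply: ler_wpM2l; first by rewrite invr_ge0 ltW.
rewrite lef_pV2 ?posrE ?ltr0n ?exprn_gt0 ?ltr0n //.
have u1 : (1 : R) <= n.+1%:R by rewrite ler1n.
nra.
Qed.

Definition Xb := alpha / 2 * (Kv + 64 * Kv) + alpha / 2 * (64 * Kv) + alpha^-1.

Lemma G_bnd1 n : msq (G n) <= 64 * Kv.
Proof.
apply: le_trans (G_bnd n) _.
have K0 := Kv_ge0.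
rewrite ler_pdivrMr ?ltr0n //.
have u1 : (1 : R) <= n.+1%:R by rewrite ler1n.
have : 0 <= 64 * Kv by lra.
nra.
Qed.

Lemma extras_bnd n :
  alpha * mdot (Em n.+1) (G n) + alpha / 2 * msq (G n) + N%:R * del n <= Xb.
Proof.
have y := young1 (Em n.+1) (G n).
have e := Em_bnd n.+1; have g := G_bnd1 n.
have nd := Ndel_le n.
have h1 : alpha^-1 / n.+1%:R <= alpha^-1.
  rewrite ler_pdivrMr ?ltr0n //.
  have u1 : (1 : R) <= n.+1%:R by rewrite ler1n.
  have : 0 <= alpha^-1 by rewrite invr_ge0 ltW.
  nra.
have h2 : alpha * mdot (Em n.+1) (G n) <= alpha / 2 * (Kv + 64 * Kv).
  have -> : alpha * mdot (Em n.+1) (G n) = alpha / 2 * (2 * mdot (Em n.+1) (G n)) by field.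
  apply: ler_wpM2l; first by apply: divr_ge0; [exact: ltW|].
  lra.
have h3 : alpha / 2 * msq (G n) <= alpha / 2 * (64 * Kv).
  by apply: ler_wpM2l => //; apply: divr_ge0; [exact: ltW|].
rewrite /Xb.
move: (alpha^-1 / n.+1%:R) nd h1 => q nd h1.
move: (alpha^-1) h1 => ai h1.
move: (alpha * mdot (Em n.+1) (G n)) h2 => A h2.
move: (alpha / 2 * msq (G n)) h3 => B h3.
lra.
Qed.

Lemma x0_lb j w : fa j (th 1 j) + alpha / 2 * msq (w - th 1 j) - del 0 <= fa j w.
Proof.
have [_ [z0 _]] := run.
by have := datum 0 j w; rewrite z0 mdot0l mulr0 addr0.
Qed.

Definition Kx1 := 2 / alpha *
  (\sum_j fa j thstar + Xb - \sum_j fa j (th 1 j) + N%:R * del 0).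
Definition Kx := 2 * Kx1 + 2 * \sum_k msq (th 1 k).

Lemma xj_bnd n j : msq (th n.+1 j) <= Kx.
Proof.
set T := fun k => fa k (th n.+1 k) - fa k (th 1 k) + del 0.
have hT : forall k, alpha / 2 * msq (th n.+1 k - th 1 k) <= T k.
  by move=> k; have := x0_lb k (th n.+1 k); rewrite /T; lra.
have T0 : forall k, 0 <= T k.
  move=> k; apply: le_trans (hT k); apply: mulr_ge0; last exact: msq_ge0.
  by apply: divr_ge0; [exact: ltW|].
have sT : \sum_k T k = \sum_k fa k (th n.+1 k) - \sum_k fa k (th 1 k) + N%:R * del 0.
  by rewrite /T big_split big_split /= sumrN sumr_const card_ord mulr_natl.
have p1 := primal1 n; have ex := extras_bnd n.
have h1 : alpha / 2 * msq (th n.+1 j - th 1 j) <= alpha / 2 * Kx1.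
  apply: le_trans (hT j) _; apply: le_trans (le_sum_term j T0) _.
  rewrite sT /Kx1.
  have -> : alpha / 2 * (2 / alpha * (\sum_j fa j thstar + Xb - \sum_j fa j (th 1 j) +
     N%:R * del 0)) = \sum_j fa j thstar + Xb - \sum_j fa j (th 1 j) + N%:R * del 0.
    by field; rewrite gt_eqF.
  move: (\sum_k fa k (th n.+1 k)) p1 => S1 p1.
  move: (alpha * mdot (Em n.+1) (G n)) (alpha / 2 * msq (G n)) (N%:R * del n) ex p1 => A B C ex p1.
  move: (\sum_j fa j thstar) (\sum_j fa j (th 1 j)) (N%:R * del 0) p1 => S2 S3 D p1.
  lra.
have h2 : msq (th n.+1 j - th 1 j) <= Kx1.
  by move: h1; rewrite ler_pM2l // divr_gt0.
have h3 := msqD_le (th n.+1 j - th 1 j) (th 1 j); rewrite subrK in h3.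
have h4 : msq (th 1 j) <= \sum_k msq (th 1 k).
  by apply: (le_sum_term (F := fun k => msq (th 1 k))) => k; exact: msq_ge0.
rewrite /Kx; lra.
Qed.


Lemma coord_bnd (w : 'rV[R]_d) K i : msq w <= K -> `|w 0 i| <= K + 1.
Proof.
move=> hK.
have h : w 0 i * w 0 i <= msq w.
  rewrite /msq /mdot big_ord1.
  by apply: (le_sum_term (F := fun b => w 0 b * w 0 b)) => b; rewrite -expr2 sqr_ge0.
have e : w 0 i * w 0 i = `|w 0 i| ^+ 2 by rewrite -expr2 real_normK ?num_real.
rewrite e in h.
have := normr_ge0 (w 0 i); nra.
Qed.

Lemma f_bound_j j K : exists M, forall w, msq w <= K -> `|f j w| <= M.
Proof.
set r := K + 1.
set A := [set v : 'rV[R]_d | forall i, `[(- r), r]%classic (v 0 i)].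
have cA : compact A.
  by apply: (@rV_compact _ _ (fun=> `[(- r), r]%classic)) => i; apply: segment_compact.
have ct : {within A, continuous (f j)} by apply: continuous_subspaceT; exact: fcont.
have cf := continuous_compact ct cA.
have [M [_ HM]] := compact_bounded cf.
exists (M + 1) => w hw.
have wA : A w.
  move=> i /=; rewrite in_itv /= -ler_norml.
  exact: coord_bnd.
have hlt : M < M + 1 by rewrite ltrDl ltr01.
have := HM (M + 1) hlt (f j w) (ex_intro2 _ _ w wA erefl).
by [].
Qed.

Lemma fa_bound K : exists M, forall j w, msq w <= K -> `|fa j w| <= M.
Proof.
have [Mf hMf] := fin_all_exists (fun j => f_bound_j j K).
exists (\sum_j `|Mf j| + alpha / 2 * `|K|) => j w hw.
have h1 := hMf j w hw.
have h2 : Mf j <= \sum_k `|Mf k|.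
  apply: le_trans (ler_norm _) _.
  by apply: (le_sum_term (F := fun k => `|Mf k|)) => k.
have h3 : `|alpha / 2 * sqn w| <= alpha / 2 * `|K|.
  rewrite normrM ger0_norm; last by apply: divr_ge0; [exact: ltW|].
  apply: ler_wpM2l; first by apply: divr_ge0; [exact: ltW|].
  rewrite sqnE ger0_norm ?msq_ge0 //.
  by apply: le_trans hw (ler_norm _).
rewrite /fa.
apply: le_trans (ler_normD _ _) _.
move: (`|alpha / 2 * sqn w|) h3 => q h3.
lra.
Qed.

Lemma conv_step j (x y : 'rV[R]_d) s : 0 < s <= 1 ->
  fa j y - fa j x <= s * (fa j (x + s^-1 *: (y - x)) - fa j x).
Proof.
case/andP=> s0 s1.
set z := x + s^-1 *: (y - x).
have ey : y = s *: z + (1 - s) *: x.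
  apply/rowP => k; rewrite /z !mxE; field; by rewrite gt_eqF.
have s01 : 0 <= s <= 1 by apply/andP; split => //; exact: ltW.
have cf := fconv j z x s01.
have cq := msq_conv z x s01.
rewrite {1}ey /fa !sqnE.
have a2 : 0 <= alpha / 2 by apply: divr_ge0; [exact: ltW|].
have := ler_wpM2l a2 cq.
move: (f j (s *: z + (1 - s) *: x)) cf => F1 cf.
move: (msq (s *: z + (1 - s) *: x)) => Q1 hq.
nra.
Qed.


Lemma eqle (x y : R) : x = y -> x <= y. Proof. by move=> ->. Qed.

Lemma ev (A B : R) : 0 < B -> exists n0, forall n, (n0 <= n)%N -> A / n.+1%:R <= B.
Proof.
move=> B0; exists (Num.Def.trunc (A / B)) => n hn.
have h := truncnS_gt (A / B).
have h2 : (Num.Def.trunc (A / B)).+1%:R <= n.+1%:R :> R by rewrite ler_nat ltnS.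
have h3 : A / B < n.+1%:R := lt_le_trans h h2.
rewrite ler_pdivrMr ?ltr0n //.
rewrite ltr_pdivrMr // in h3.
by rewrite mulrC; apply: ltW.
Qed.

Lemma msq_row_le (A : 'M[R]_(N, d)) j : msq (row j A) <= msq A.
Proof.
rewrite [X in _ <= X]/msq mdot_rowsE.
by apply: (le_sum_term (F := fun k => msq (row k A))) => k; exact: msq_ge0.
Qed.

Lemma final eps' : 0 < eps' -> exists n0, forall n, (n0 <= n)%N ->
  \sum_j fa j (avgv (th n.+1)) <= \sum_j fa j thstar + eps'.
Proof.
move=> e0.
have Kx0 : 0 <= Kx by apply: le_trans (msq_ge0 _) (xj_bnd 0 (Ordinal N0)).
set Kz := 2 * Kx + 2.
have [M hM] := fa_bound Kz.
have M0 : 0 <= M.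
  apply: le_trans (hM (Ordinal N0) 0 _); first exact: normr_ge0.
  by rewrite /msq mdot0l /Kz; lra.
set Mt := N%:R * M.
have Mt0 : 0 <= Mt by apply: mulr_ge0; rewrite ?ler0n.
set sg := (1 + 8 * Mt / eps')^-1.
have q0 : 0 <= 8 * Mt / eps' by apply: divr_ge0; [lra | exact: ltW].
have sg0 : 0 < sg by rewrite invr_gt0; lra.
have sg1 : sg <= 1 by rewrite invf_le1; lra.
have sgM : sg * Mt <= eps' / 8.
  rewrite /sg mulrC ler_pdivrMr; last lra.
  have -> : (eps' / 8) * (1 + 8 * Mt / eps') = eps' / 8 + Mt.
    by field; rewrite gt_eqF.
  have : 0 <= eps' / 8 by apply: divr_ge0; lra.
  move: (eps' / 8) => e8; lra.
have K0 := Kv_ge0.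
set c := eps' / (4 * alpha * (Kv + 1)).
have c0 : 0 < c.
  apply: divr_gt0 => //; apply: mulr_gt0; last lra.
  by apply: mulr_gt0.

have [n1 h1] := ev (64 * Kv) (exprn_gt0 2 sg0).
have [n2 h2] := ev (64 * Kv) (divr_gt0 e0 (mulr_gt0 (ltr0Sn R 3) a0)).
have [n3 h3] := ev (64 * Kv) (mulr_gt0 c0 (divr_gt0 e0 (mulr_gt0 (ltr0Sn R 3) a0))).
have [n4 h4] := ev (alpha^-1) (divr_gt0 e0 (ltr0Sn R 7)).
exists (maxn (maxn n1 n2) (maxn n3 n4)) => n hn.
have hn1 : (n1 <= n)%N by apply: leq_trans hn; rewrite leq_max leq_maxl.
have hn2 : (n2 <= n)%N by apply: leq_trans hn; rewrite leq_max leq_maxr.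
have hn3 : (n3 <= n)%N by apply: leq_trans hn; rewrite leq_max leq_maxl orbT.
have hn4 : (n4 <= n)%N by apply: leq_trans hn; rewrite leq_max leq_maxr orbT.
have g := G_bnd n.
set gg := msq (G n) in g.
have g1 : gg <= sg ^+ 2 := le_trans g (h1 n hn1).
have g2 : gg <= eps' / (4 * alpha) := le_trans g (h2 n hn2).
have g3 : gg <= c * (eps' / (4 * alpha)) := le_trans g (h3 n hn3).
have d4 : N%:R * del n <= eps' / 8 := le_trans (Ndel_le n) (h4 n hn4).
have loc : forall j, fa j (avgv (th n.+1)) - fa j (th n.+1 j) <= 2 * sg * M.
  move=> j.
  have s01 : 0 < sg <= 1 by apply/andP.
  apply: le_trans (conv_step j (th n.+1 j) (avgv (th n.+1)) s01) _.
  set z := th n.+1 j + sg^-1 *: (avgv (th n.+1) - th n.+1 j).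
  have xb : msq (th n.+1 j) <= Kx := xj_bnd n j.
  have hz : msq z <= Kz.
    have e1 : z = th n.+1 j - sg^-1 *: row j (G n).
      by rewrite /z row_G; apply/rowP => k; rewrite !mxE; ring.
    rewrite e1.
    apply: le_trans (msqB_le _ _) _.
    rewrite msqZ.
    have r1 := msq_row_le (G n) j; rewrite -/gg in r1.
    have r2 : sg^-1 ^+ 2 * msq (row j (G n)) <= 1.
      have sp : 0 < sg ^+ 2 by apply: exprn_gt0.
      rewrite exprVn -ler_pdivlMl ?invr_gt0 // invrK mulr1.
      exact: le_trans r1 g1.
    rewrite /Kz; lra.
  have f1 := hM j z hz.
  have xz : msq (th n.+1 j) <= Kz by rewrite /Kz; lra.
  have f2 := hM j _ xz.
  have : fa j z - fa j (th n.+1 j) <= 2 * M.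
    have := ler_norm (fa j z); have := ler_norm (- fa j (th n.+1 j)); rewrite normrN.
    lra.
  move=> hd.
  have := ler_wpM2l (ltW sg0) hd.
  by rewrite mulrA (mulrC sg 2).
set xb := avgv (th n.+1).
have sloc : \sum_j fa j xb - \sum_j fa j (th n.+1 j) <= 2 * sg * Mt.
  rewrite -sumrB.
  have := ler_sum (index_enum 'I_N) (P := xpredT) (fun j _ => loc j).
  rewrite sumr_const card_ord => h; apply: le_trans h _.
  by rewrite -mulr_natl /Mt; apply: eqle; ring.
have p1 := primal1 n.
have y := young (Em n.+1) (G n) c0.
rewrite -/gg in y p1.
have eb := Em_bnd n.+1.
have a2 : 0 < alpha / 2 by apply: divr_gt0.
have F1 : alpha / 2 * (c * msq (Em n.+1)) <= eps' / 8.
  have h : c * msq (Em n.+1) <= c * Kv by apply: ler_wpM2l; [exact: ltW|].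
  apply: le_trans (ler_wpM2l (ltW a2) h) _.
  have -> : alpha / 2 * (c * Kv) = eps' / 8 * (Kv / (Kv + 1)).
    rewrite /c; field; apply/andP; split; rewrite gt_eqF //; lra.
  apply: ler_piMr; first by apply: divr_ge0; lra.
  by rewrite ler_pdivrMr; lra.
have F2 : alpha / 2 * (c^-1 * gg) <= eps' / 8.
  have h : c^-1 * gg <= eps' / (4 * alpha).
    have ci : 0 <= c^-1 by rewrite invr_ge0 ltW.
    have := ler_wpM2l ci g3.
    by rewrite [c^-1 * (c * _)]mulrA mulVf ?mul1r // gt_eqF.
  apply: le_trans (ler_wpM2l (ltW a2) h) _.
  by apply: eqle; field; rewrite gt_eqF.
have F3 : alpha / 2 * gg <= eps' / 8.
  apply: le_trans (ler_wpM2l (ltW a2) g2) _.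
  by apply: eqle; field; rewrite gt_eqF.
have F4 : alpha * mdot (Em n.+1) (G n) <=
    alpha / 2 * (c * msq (Em n.+1)) + alpha / 2 * (c^-1 * gg).
  rewrite -mulrDr.
  have -> : alpha * mdot (Em n.+1) (G n) = alpha / 2 * (2 * mdot (Em n.+1) (G n)) by field.
  apply: ler_wpM2l; [exact: ltW a2 | exact: y].
have F5 : 2 * sg * Mt <= 2 * (eps' / 8).
  have -> : 2 * sg * Mt = 2 * (sg * Mt) by ring.
  by apply: ler_wpM2l.
have e88 : eps' = 8 * (eps' / 8) by field.
rewrite [X in _ <= _ + X]e88.
move: sloc p1 F1 F2 F3 F4 F5 d4.
move: (\sum_j fa j xb) (\sum_j fa j (th n.+1 j)) (\sum_j fa j thstar) => S1 S2 S3.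
move: (alpha * mdot (Em n.+1) (G n)) (alpha / 2 * gg) (N%:R * del n) => A B C.
move: (alpha / 2 * (c * msq (Em n.+1))) (alpha / 2 * (c^-1 * gg)) (2 * sg * Mt) => D E F.
have : 0 <= eps' / 8 by apply: divr_ge0; lra.
move: (eps' / 8) => e8.
lra.
Qed.

End Main.

Unset Implicit Arguments.
Set Strict Implicit.
Set Printing Implicit Defensive.

Theorem theorem4p1 (R : realType) (d N : nat) (f : 'I_N -> 'rV[R]_d -> R)
    (thstar : 'rV[R]_d) :
  (0 < N)%N ->
  (forall j, continuous (f j)) ->
  (forall j, convex_fun (f j)) ->
  coercive (avgf f) ->
  (forall x, avgf f thstar <= avgf f x) ->
  forall eps : R, 0 < eps ->
  exists alpha0 : R, 0 < alpha0 /\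
  forall alpha : R, 0 < alpha -> alpha < alpha0 ->
  forall th ze : nat -> 'I_N -> 'rV[R]_d,
    let fa := fun (j : 'I_N) (x : 'rV[R]_d) => f j x + alpha / 2 * sqn x in
    dualfl_run 0 th ze ->
    (exists gamma : R, 0 < gamma /\
       forall (n : nat) (j : 'I_N),
         (Gap fa alpha (ze n j) j (th n.+1 j)
           <= ((N%:R * alpha * (n.+1%:R `^ (4 + gamma)))^-1)%:E)%E) ->
    exists n0 : nat, forall n : nat, (n0 <= n)%N ->
      avgf f (avgv (th n)) - avgf f thstar <= eps.
Proof.
move=> N0 fcont fconv _ _ eps e0.
have s0 : 0 <= sqn thstar by rewrite sqnE msq_ge0.
exists (eps / (sqn thstar + 1)); split.
  by apply: divr_gt0 => //; lra.
move=> alpha a0 aLt th ze fa run [gamma [g0 gap]].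
have Np : (0 : R) < N%:R by rewrite ltr0n.
have e1 : 0 < N%:R * eps / 2 by apply: divr_gt0 => //; apply: mulr_gt0.
have [n0 hn0] := final thstar N0 fcont fconv a0 g0 run gap e1.
exists n0.+1 => -[//|k] hk.
have := hn0 k hk.
rewrite /fa /= !big_split /= !sumr_const card_ord /avgf.
set xb := avgv (th k.+1).
have hs : alpha * sqn thstar <= eps.
  have h1 : alpha * (sqn thstar + 1) <= eps.
    rewrite -ler_pdivlMr; first exact: ltW.
    lra.
  rewrite mulrDr mulr1 in h1.
  lra.
have sx : 0 <= sqn xb by rewrite sqnE msq_ge0.
rewrite -(mulr_natl (alpha / 2 * sqn xb)) -(mulr_natl (alpha / 2 * sqn thstar)).
move=> h.
have Ni : 0 < N%:R^-1 :> R by rewrite invr_gt0.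
rewrite -mulrBr.
rewrite -ler_pdivlMl //.
move: (\sum_(i < N) f i xb) (\sum_(i < N) f i thstar) h => A B h.
have h2 : N%:R * (alpha / 2 * sqn thstar) <= N%:R * (eps / 2).
  apply: ler_wpM2l; first lra.
  have -> : alpha / 2 * sqn thstar = (alpha * sqn thstar) / 2 by ring.
  lra.
have h3 : 0 <= N%:R * (alpha / 2 * sqn xb).
  by apply: mulr_ge0; [lra | apply: mulr_ge0 => //; apply: divr_ge0; lra].
rewrite invrK.
have e2 : N%:R * eps = 2 * (N%:R * (eps / 2)) by field.
have e3 : N%:R * eps / 2 = N%:R * (eps / 2) by rewrite mulrA.
rewrite e2; rewrite e3 in h.
move: h2 h3 h; move: (N%:R * (alpha / 2 * sqn thstar)) (N%:R * (alpha / 2 * sqn xb)) => P Q.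
move: (N%:R * (eps / 2)) => Z.
lra.
Qed.
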